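(* Let $(W,V)$ be an independent-type $\mathcal Y$-valued transition matrix on $\mathcal X$ with $W(x|x')=\frac1d$ for all $x,x'\in\mathcal X$, and let $P$ be a distribution on $\mathcal X$. Then $$\mathcal L^I_{2,W,V}=\big\{([W,A],(A^TV_y)_{y\in\mathcal Y})\in\mathcal G^I:\ A\in M_d(\mathbb R),\ A^Tu_{\mathcal X}=0\big\},$$ $$\mathcal L^I_{2,P,W,V}=\big\{([W,A],(A^TV_y)_{y\in\mathcal Y})\in\mathcal G^I:\ A\in M_d(\mathbb R),\ A^Tu_{\mathcal X}=0,\ AP=0\big\},$$ where $[X,Y]=XY-YX$.
   Context: Let $\mathcal X=\{1,\dots,d\}$, $\mathcal Y=\{1,\dots,d_Y\}$, $u_{\mathcal X}\in\mathbb R^{\mathcal X}$ the all-ones vector. An independent-type $\mathcal Y$-valued transition matrix $(W,V)$ consists of a column-stochastic $d\times d$ matrix $W(x|x')$ and a transition matrix $V$ from $\mathcal X$ to $\mathcal Y$ ($V(y|x')\ge0$, $\sum_yV(y|x')=1$), defining $W_y:=WD(V_y)$, where $V_y\in\mathbb R^{\mathcal X}$, $V_y(x')=V(y|x')$, and $D(v)$ is the diagonal matrix with diagonal $v$. $\mathcal G^I$ is the set of pairs $(B,C)$ with $B$ a real $d\times d$ matrix vanishing wherever $W(x|x')=0$ and $C=(C_y)_{y\in\mathcal Y}$, $C_y\in\mathbb R^{\mathcal X}$, $C_y(x')=0$ wherever $V(y|x')=0$. $\mathcal L^I_{1,W,V}:=\{(B,C)\in\mathcal G^I: B^Tu_{\mathcal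 X}=0,\ \sum_yC_y=0\}$. Let $\mathcal L_2:=\{(W_yA-AW_y)_{y\in\mathcal Y}: A\in M_d(\mathbb R),\ A^Tu_{\mathcal X}=0\}$ and $\mathcal L_{2,P}:=\{(W_yA-AW_y)_{y}: A^Tu_{\mathcal X}=0,\ AP=0\}$. Then $\mathcal L^I_{2,W,V}:=\{(B,C)\in\mathcal L^I_{1,W,V}: (BD(V_y)+WD(C_y))_{y}\in\mathcal L_2\}$ and $\mathcal L^I_{2,P,W,V}:=\{(B,C)\in\mathcal L^I_{1,W,V}:(BD(V_y)+WD(C_y))_y\in\mathcal L_{2,P}\}$. *)

(* Defs.v *)
(* Real numbers are modelled by an arbitrary realFieldType R
   (the statement is purely linear-algebraic). X = 'I_d, Y = 'I_dY. *)
From HB Require Import structures.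
From mathcomp Require Import all_boot all_order all_algebra.
Set Implicit Arguments. Unset Strict Implicit. Unset Printing Implicit Defensive.
Import Order.TTheory GRing.Theory Num.Theory.
Local Open Scope ring_scope.

Section Defs.
Variables (R : realFieldType) (d dY : nat).

Definition onesX : 'cV[R]_d := const_mx 1.

Definition Dmx (v : 'cV[R]_d) : 'M[R]_d := diag_mx v^T.

(* W(x|x') = W x x' ; V(y|x') = V y x' *)
Definition col_stochastic (W : 'M[R]_d) : Prop :=
  (forall x x', 0 <= W x x') /\ (forall x', \sum_x W x x' = 1).

Definition transition_XY (V : 'M[R]_(dY, d)) : Prop :=
  (forall y x', 0 <= V y x') /\ (forall x', \sum_y V y x' = 1).

Definition is_distribution (P : 'cV[R]_d) : Prop :=
  (forall x, 0 <= P x 0) /\ \sum_x P x 0 = 1.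

Definition Vy (V : 'M[R]_(dY, d)) (y : 'I_dY) : 'cV[R]_d := (row y V)^T.

Definition Wy (W : 'M[R]_d) (V : 'M[R]_(dY, d)) (y : 'I_dY) : 'M[R]_d :=
  W *m Dmx (Vy V y).

Definition inGI (W : 'M[R]_d) (V : 'M[R]_(dY, d))
  (B : 'M[R]_d) (C : 'I_dY -> 'cV[R]_d) : Prop :=
  (forall x x', W x x' = 0 -> B x x' = 0) /\
  (forall y x', V y x' = 0 -> C y x' 0 = 0).

Definition inL1I W V B C : Prop :=
  inGI W V B C /\ B^T *m onesX = 0 /\ \sum_(y < dY) C y = 0.

Definition inL2 W V (F : 'I_dY -> 'M[R]_d) : Prop :=
  exists A : 'M[R]_d, A^T *m onesX = 0 /\
    forall y, F y = Wy W V y *m A - A *m Wy W V y.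

Definition inL2P (P : 'cV[R]_d) W V (F : 'I_dY -> 'M[R]_d) : Prop :=
  exists A : 'M[R]_d, A^T *m onesX = 0 /\ A *m P = 0 /\
    forall y, F y = Wy W V y *m A - A *m Wy W V y.

Definition inL2I W V B C : Prop :=
  inL1I W V B C /\
  inL2 W V (fun y => B *m Dmx (Vy V y) + W *m Dmx (C y)).

Definition inL2PI P W V B C : Prop :=
  inL1I W V B C /\
  inL2P P W V (fun y => B *m Dmx (Vy V y) + W *m Dmx (C y)).

End Defs.

(* Main.v *)
Require Import Defs.
From HB Require Import structures.
From mathcomp Require Import all_boot all_order all_algebra.
From mathcomp Require Import ring.
Import Order.TTheory GRing.Theory Num.Theory.
Local Open Scope ring_scope.

Lemma maddE (R : realFieldType) d (M N : 'M[R]_d) i j : (M + N) i j = M i j + N i j.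
Proof. by rewrite mxE. Qed.
Lemma msubE (R : realFieldType) d (M N : 'M[R]_d) i j : (M - N) i j = M i j - N i j.
Proof. by rewrite !mxE. Qed.

Section Aux.
Variables (R : realFieldType) (d dY : nat) (W : 'M[R]_d) (V : 'M[R]_(dY, d)).
Hypothesis hW : forall x x' : 'I_d, W x x' = (d%:R)^-1.

Lemma eMD (M : 'M[R]_d) v i j : (M *m Dmx v) i j = M i j * v j 0.
Proof. by rewrite /Dmx mul_mx_diag !mxE. Qed.

Lemma eWM (M : 'M[R]_d) i j : (W *m M) i j = d%:R^-1 * \sum_k M k j.
Proof. rewrite !mxE mulr_sumr; apply: eq_bigr => k _; by rewrite hW. Qed.

Lemma eWD v i j : (W *m Dmx v) i j = d%:R^-1 * v j 0.
Proof. by rewrite eMD hW. Qed.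

Lemma eWy y i j : Wy W V y i j = d%:R^-1 * V y j.
Proof. by rewrite /Wy eMD hW /Vy !mxE. Qed.

Lemma eWyA (A : 'M[R]_d) y i j :
  (Wy W V y *m A) i j = d%:R^-1 * \sum_k V y k * A k j.
Proof. rewrite !mxE mulr_sumr; apply: eq_bigr => k _; by rewrite eWy mulrA. Qed.

Lemma eAWy (A : 'M[R]_d) y i j :
  (A *m Wy W V y) i j = d%:R^-1 * V y j * \sum_k A i k.
Proof.
rewrite !mxE mulr_sumr; apply: eq_bigr => k _; rewrite eWy; ring.
Qed.

Lemma eAW (A : 'M[R]_d) i j : (A *m W) i j = d%:R^-1 * \sum_k A i k.
Proof. rewrite !mxE mulr_sumr; apply: eq_bigr => k _; rewrite hW; ring. Qed.

Lemma colsum0 (A : 'M[R]_d) : A^T *m onesX R d = 0 <-> forall j, \sum_i A i j = 0.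
Proof.
split.
  move=> h j; have := congr1 (fun M : 'cV[R]_d => M j 0) h.
  rewrite /= !mxE => e; rewrite -[RHS]e; apply: eq_bigr => i _; by rewrite !mxE mulr1.
move=> h; apply/matrixP => j k; rewrite !mxE -[RHS](h j).
apply: eq_bigr => i _; by rewrite !mxE mulr1.
Qed.

Lemma eAtV (A : 'M[R]_d) y j : (A^T *m Vy V y) j 0 = \sum_k V y k * A k j.
Proof. rewrite !mxE; apply: eq_bigr => k _; by rewrite !mxE mulrC. Qed.

Lemma fwd (B A : 'M[R]_d) (C : 'I_dY -> 'cV[R]_d) :
  transition_XY V -> \sum_(y < dY) C y = 0 -> (forall j, \sum_i A i j = 0) ->
  (forall y, B *m Dmx (Vy V y) + W *m Dmx (C y) = Wy W V y *m A - A *m Wy W V y) ->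
  B = W *m A - A *m W /\ (forall y, C y = A^T *m Vy V y).
Proof.
move=> [_ hV] hC hA hF.
have E : forall y i j, B i j * V y j + d%:R^-1 * C y j 0 =
    d%:R^-1 * (\sum_k V y k * A k j) - d%:R^-1 * V y j * \sum_k A i k.
  move=> y i j; have := congr1 (fun M : 'M[R]_d => M i j) (hF y).
  by rewrite /= maddE msubE eMD eWD eWyA eAWy /Vy !mxE.
have EB : forall i j, B i j = - (d%:R^-1 * \sum_k A i k).
  move=> i j.
  transitivity (\sum_y (B i j * V y j + d%:R^-1 * C y j 0)).
    rewrite big_split /= -mulr_sumr -mulr_sumr hV mulr1.
    have -> : \sum_y C y j 0 = 0 by rewrite -summxE hC mxE.
    by rewrite mulr0 addr0.
  under eq_bigr => y _ do rewrite E.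
  rewrite sumrB -mulr_sumr -!mulr_suml exchange_big /=.
  under eq_bigr => k _ do rewrite -mulr_suml hV mul1r.
  rewrite hA -mulr_sumr hV mulr0; ring.
split.
  apply/matrixP => i j; rewrite EB msubE eWM eAW hA; ring.
move=> y; apply/matrixP => j z; rewrite (ord1 z) eAtV.
have := E y j j; rewrite EB => e.
have dn0 : d%:R^-1 != 0 :> R.
  by rewrite invr_eq0 pnatr_eq0 -lt0n (leq_ltn_trans (leq0n j) (ltn_ord j)).
apply: (mulfI dn0).
rewrite (_ : d%:R^-1 * C y j 0 = - (d%:R^-1 * \sum_k A j k) * V y j + d%:R^-1 * C y j 0 + d%:R^-1 * (\sum_k A j k) * V y j); last by ring.
rewrite e; ring.
Qed.

Lemma bwd (B A : 'M[R]_d) (C : 'I_dY -> 'cV[R]_d) :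
  transition_XY V -> (forall j, \sum_i A i j = 0) ->
  B = W *m A - A *m W -> (forall y, C y = A^T *m Vy V y) ->
  [/\ B^T *m onesX R d = 0, \sum_(y < dY) C y = 0 &
  (forall y, B *m Dmx (Vy V y) + W *m Dmx (C y) = Wy W V y *m A - A *m Wy W V y)].
Proof.
move=> [_ hV] hA hB hC.
have EB : forall i j, B i j = - (d%:R^-1 * \sum_k A i k).
  by move=> i j; rewrite hB msubE eWM eAW hA; ring.
split.
- apply/colsum0 => j; under eq_bigr => i _ do rewrite EB.
  rewrite sumrN -mulr_sumr exchange_big /=.
  under eq_bigr => k _ do rewrite hA.
  by rewrite big1 // mulr0 oppr0.
- apply/matrixP => j z; rewrite summxE (ord1 z) mxE.
  under eq_bigr => y _ do rewrite hC eAtV.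
  rewrite exchange_big /=.
  under eq_bigr => k _ do rewrite -mulr_suml hV mul1r.
  exact: hA.
- move=> y; apply/matrixP => i j.
  rewrite maddE msubE eMD eWD eWyA eAWy EB hC eAtV /Vy !mxE; ring.
Qed.

End Aux.

Theorem corollary3 (R : realFieldType) (d dY : nat)
  (W : 'M[R]_d) (V : 'M[R]_(dY, d)) (P : 'cV[R]_d) :
  col_stochastic W -> transition_XY V ->
  (forall x x' : 'I_d, W x x' = (d%:R)^-1) ->
  is_distribution P ->
  (forall (B : 'M[R]_d) (C : 'I_dY -> 'cV[R]_d),
     inL2I W V B C <->
     exists A : 'M[R]_d, A^T *m onesX R d = 0 /\
       B = W *m A - A *m W /\ (forall y, C y = A^T *m Vy V y) /\
       inGI W V B C) /\
  (forall (B : 'M[R]_d) (C : 'I_dY -> 'cV[R]_d),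
     inL2PI P W V B C <->
     exists A : 'M[R]_d, A^T *m onesX R d = 0 /\ A *m P = 0 /\
       B = W *m A - A *m W /\ (forall y, C y = A^T *m Vy V y) /\
       inGI W V B C).
Proof.
move=> _ hV hW _; split=> B C; split.
- move=> [[hG [_ hC]] [A [hA hF]]].
  have [eB eC] := @fwd R d dY W V hW _ _ _ hV hC (proj1 (@colsum0 R d A) hA) hF.
  by exists A.
- move=> [A [hA [eB [eC hG]]]].
  have [h1 h2 h3] := @bwd R d dY W V hW _ _ _ hV (proj1 (@colsum0 R d A) hA) eB eC.
  by split; [split | exists A].
- move=> [[hG [_ hC]] [A [hA [hP hF]]]].
  have [eB eC] := @fwd R d dY W V hW _ _ _ hV hC (proj1 (@colsum0 R d A) hA) hF.
  by exists A.
- move=> [A [hA [hP [eB [eC hG]]]]].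
  have [h1 h2 h3] := @bwd R d dY W V hW _ _ _ hV (proj1 (@colsum0 R d A) hA) eB eC.
  by split; [split | exists A].
Qed.
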